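(* Consider the following market for a sin good subject to a per-unit tax $t>0$. There are $N$ firms $k=1,\dots,N$ producing at common constant marginal cost $m$ and competing à la Bertrand–Nash. Each firm $k$ simultaneously chooses a salient posted price $p^s_k$ and a shrouded tax surcharge $\tau_k\in\{0,t\}$ (it ''shrouds'' if $\tau_k=t$); its effective consumer price is $p_k=p^s_k+\tau_k$ and its producer price is $p_k-t$. A fraction $\lambda$ of consumers are attentive: they observe all effective prices and all shrouding decisions, and buying from a shrouding firm entails a fixed disutility $s\ge 0$. The remaining fraction $1-\lambda$ are inattentive: they observe posted prices but perceive the surcharge of a shrouding firm as $\theta t$; demand of inattentive consumers is split equally among the firms with the lowest posted price. Firms cannot price-discriminate between consumer types. If $0<\lambda<1$ and $\theta<1$, then there is no pure-strategy equilibrium in which no firm shrouds taxes. If moreover $s>0$, then there is no symmetric pure-strategy equilibrium.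
   Context: Consumers otherwise behave as cost-minimizing buyers of a homogeneous good given their (perceived) prices; a symmetric equilibrium is one in which all firms choose the same $(p^s_k,\tau_k)$. *)

(* Defs.v *)
From HB Require Import structures.
From mathcomp Require Import all_boot all_order all_algebra.
Set Implicit Arguments. Unset Strict Implicit. Unset Printing Implicit Defensive.
Import Order.TTheory GRing.Theory Num.Theory.
Local Open Scope ring_scope.

Section Market.
Variable R : realFieldType.
Variable N : nat.

(* A firm's strategy: (salient posted price p^s, shrouds?) ; shrouds = true
   means tau = t, shrouds = false means tau = 0. *)
Definition strategy := (R * bool)%type.
Definition profile := 'I_N -> strategy.

Definition eff_price (t : R) (x : strategy) : R := x.1 + (if x.2 then t else 0).

Definition attentive_cost (t s : R) (x : strategy) : R :=
  eff_price t x + (if x.2 then s else 0).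

Definition perceived_price (t theta : R) (x : strategy) : R :=
  x.1 + (if x.2 then theta * t else 0).

Definition minimizers (c : 'I_N -> R) : {set 'I_N} :=
  [set j | [forall i, c j <= c i]].
Definition share (c : 'I_N -> R) (k : 'I_N) : R :=
  if k \in minimizers c then (#|minimizers c|%:R)^-1 else 0.

(* demand of firm k: mass lam of attentive and 1 - lam of inattentive
   consumers, each buying one unit from a cheapest (perceived) firm *)
Definition demand (t s theta lam : R) (sigma : profile) (k : 'I_N) : R :=
  lam * share (fun j => attentive_cost t s (sigma j)) k
  + (1 - lam) * share (fun j => perceived_price t theta (sigma j)) k.

Definition profit (m t s theta lam : R) (sigma : profile) (k : 'I_N) : R :=
  (eff_price t (sigma k) - t - m) * demand t s theta lam sigma k.

Definition deviate (sigma : profile) (k : 'I_N) (d : strategy) : profile :=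
  fun j => if j == k then d else sigma j.

Definition is_equilibrium (m t s theta lam : R) (sigma : profile) : Prop :=
  forall (k : 'I_N) (d : strategy),
    profit m t s theta lam (deviate sigma k d) k <= profit m t s theta lam sigma k.

Definition symmetric_profile (sigma : profile) : Prop := forall i j : 'I_N, sigma i = sigma j.

Definition no_firm_shrouds (sigma : profile) : Prop := forall k : 'I_N, (sigma k).2 = false.

End Market.

(* Main.v *)
Require Import Defs.
From HB Require Import structures.
From mathcomp Require Import all_boot all_order all_algebra.
From mathcomp Require Import ring lra.
Import Order.TTheory GRing.Theory Num.Theory.
Local Open Scope ring_scope.

Section Aux.
Variable R : realFieldType.
Variable N : nat.
Implicit Types c : 'I_N -> R.

Lemma share_ge0 c k : 0 <= share c k.
Proof. rewrite /share; case: ifP => _ //; by rewrite invr_ge0 ler0n. Qed.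

Lemma share_ext c c' : c =1 c' -> share c =1 share c'.
Proof.
move=> E k; rewrite /share /minimizers.
have -> : [set j | [forall i, c j <= c i]] = [set j | [forall i, c' j <= c' i]].
  by apply/setP => j; rewrite !inE; apply: eq_forallb => i; rewrite !E.
by [].
Qed.

Lemma share_one c k : (forall j, j != k -> c k < c j) -> share c k = 1.
Proof.
move=> H; rewrite /share.
have -> : minimizers c = [set k].
  apply/setP => j; rewrite !inE; apply/forallP/eqP => [Hj|->].
  - case: (eqVneq j k) => [//|/H hk]; have := Hj k; by rewrite leNgt hk.
  - move=> i; case: (eqVneq i k) => [->//|/H]; exact: ltW.
by rewrite set11 cards1 invr1.
Qed.

Lemma share_zero c k j : c j < c k -> share c k = 0.
Proof.
move=> H; rewrite /share; case: ifP => // /[!inE] /forallP /(_ j).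
by rewrite leNgt H.
Qed.

Lemma share_eq c k : (forall i j, c i = c j) -> share c k = (N%:R)^-1.
Proof.
move=> H; rewrite /share.
have -> : minimizers c = setT.
  apply/setP => j; rewrite !inE; apply/forallP => i; by rewrite (H j i).
by rewrite in_setT cardsT card_ord.
Qed.

Lemma share_min_gt0 c k : (forall i, c k <= c i) -> 0 < share c k.
Proof.
move=> H; rewrite /share.
have Hk : k \in minimizers c by rewrite inE; apply/forallP.
rewrite Hk invr_gt0 ltr0n card_gt0; apply/set0Pn; by exists k.
Qed.

End Aux.
Arguments share_ge0 {R N}.
Arguments share_ext {R N}.
Arguments share_one {R N}.
Arguments share_zero {R N}.
Arguments share_eq {R N}.
Arguments share_min_gt0 {R N}.

Theorem lemma2 (R : realFieldType) (N : nat) (m t s theta lam : R) :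
  (1 < N)%N -> 0 < t -> 0 <= s -> 0 < lam < 1 -> theta < 1 ->
  (forall sigma : profile R N,
      no_firm_shrouds sigma -> ~ is_equilibrium m t s theta lam sigma) /\
  (0 < s -> forall sigma : profile R N,
      symmetric_profile sigma -> ~ is_equilibrium m t s theta lam sigma).
Proof.
move=> HN Ht Hs /andP[Hl0 Hl1] Hth.
have i0 : 'I_N by exists 0%N; apply: ltn_trans HN.
have HNR : 2 <= (N%:R : R) by rewrite (ler_nat R 2 N).
set x := (N%:R : R)^-1.
have Hx : 0 < x /\ x <= 2^-1.
  have xN : x * N%:R = 1 by rewrite mulVf //; apply: lt0r_neq0; lra.
  have : 0 < x by rewrite invr_gt0; lra.
  move=> xp; split => //; nra.
case: Hx => Hx0 Hx2.
have nonneg : forall sigma : profile R N, is_equilibrium m t s theta lam sigma ->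
    forall k, 0 <= profit m t s theta lam sigma k.
  move=> sigma Heq k; have := Heq k (m, true).
  rewrite {1}/profit /deviate eqxx /eff_price /=.
  by rewrite addrK subrr mul0r.
have part1 : forall sigma : profile R N,
      no_firm_shrouds sigma -> ~ is_equilibrium m t s theta lam sigma.
  move=> sigma Hns Heq.
  pose pr j := (sigma j).1.
  have Ea : (fun j => attentive_cost t s (sigma j)) =1 pr.
    by move=> j; rewrite /attentive_cost /eff_price Hns !addr0.
  have Ep : (fun j => perceived_price t theta (sigma j)) =1 pr.
    by move=> j; rewrite /perceived_price Hns !addr0.
  have Epr : forall k, profit m t s theta lam sigma k = (pr k - t - m) * share pr k.
    move=> k; rewrite /profit /demand (share_ext _ _ Ea k) (share_ext _ _ Ep k).
    rewrite /eff_price Hns addr0; congr (_ * _); rewrite /pr; ring.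
  case: (@arg_minP _ _ _ i0 xpredT pr isT) => k0 _ Hk0.
  set p0 := pr k0 in Hk0 *.
  have Hd : 0 <= p0 - t - m.
    have := nonneg _ Heq k0; rewrite Epr.
    have := share_min_gt0 pr k0 (fun i => Hk0 i isT); nra.
  (* shrouding deviation beats zero profit *)
  have shroud : forall j, profit m t s theta lam sigma j <= 0 -> False.
    move=> j Hj.
    set e := (1 - theta) * t / 2.
    have He : 0 < e by rewrite /e; apply: divr_gt0 => //; nra.
    have := Heq j (p0 - theta * t - e, true).
    rewrite /profit /demand.
    rewrite (share_one (fun j0 => perceived_price t theta (deviate sigma j (p0 - theta * t - e, true) j0)) j).
      rewrite /deviate eqxx /eff_price /=.
      have := share_ge0 (fun j0 => attentive_cost t s (deviate sigma j (p0 - theta * t - e, true) j0)) j.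
      set a := share _ _.
      rewrite /profit in Hj.
      have he2 : e * 2 = (1 - theta) * t by rewrite /e mulfVK // pnatr_eq0.
      move=> ha; move: Hj; set q := _ * _ => Hj.
      have hM : 0 < p0 - theta * t - e + t - t - m by lra.
      have hD : 0 < lam * a + (1 - lam) * 1 by nra.
      have := mulr_gt0 hM hD; lra.

    move=> i hi; rewrite /deviate eqxx (negbTE hi) /perceived_price Hns /=.
    have := Hk0 i isT; rewrite /pr; lra.
  case: (pickP (fun j => p0 < pr j)) => [j Hj | Hall].
    apply: (shroud j); rewrite Epr (share_zero _ _ _ Hj) mulr0 //.
  have Heqp : forall i j, pr i = pr j.
    have E : forall i, pr i = p0.
      move=> i; apply/eqP; rewrite eq_le Hk0 // andbT; have := Hall i; 
      by rewrite /= ltNge => /negbFE.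
    by move=> i j; rewrite !E.
  have Hsh : forall k, share pr k = x by move=> k; apply: share_eq.
  case: (eqVneq (p0 - t - m) 0) => Hd0.
    apply: (shroud k0); rewrite Epr Hsh -/p0 Hd0 mul0r //.
  have Hdp : 0 < p0 - t - m by rewrite lt_def Hd0 Hd.
  set d := p0 - t - m in Hdp.
  have := Heq k0 (p0 - d / 4, false).
  rewrite Epr Hsh -/p0 /profit /demand.
  rewrite (share_one (fun j0 => perceived_price t theta (deviate sigma k0 (p0 - d / 4, false) j0)) k0).
  rewrite (share_one (fun j0 => attentive_cost t s (deviate sigma k0 (p0 - d / 4, false) j0)) k0).
  - rewrite /deviate eqxx /eff_price /= -/d.
    have hd : d = p0 - t - m by [].
    have -> : lam * 1 + (1 - lam) * 1 = 1 by ring.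
    have := ler_wpM2l (ltW Hdp) Hx2; lra.
  - move=> i hi; rewrite /deviate eqxx (negbTE hi) /attentive_cost /eff_price Hns /=.
    have := Heqp i k0; rewrite /pr -/p0; lra.
  - move=> i hi; rewrite /deviate eqxx (negbTE hi) /perceived_price Hns /=.
    have := Heqp i k0; rewrite /pr -/p0; lra.
split => // Hsp sigma Hsym Heq.
case Hb: (sigma i0).2.
- have Es : forall k, sigma k = ((sigma i0).1, true).
    by move=> k; rewrite (Hsym k i0); case: (sigma i0) Hb => ? ? /= ->.
  set p := (sigma i0).1 in Es.
  have Hsh : forall c : 'I_N -> R, (forall k, c k = c i0) -> forall k, share c k = x.
    by move=> c Hc k; apply: share_eq => i j; rewrite !Hc.
  have Epr : forall k, profit m t s theta lam sigma k = (p - m) * x.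
    move=> k; rewrite /profit /demand !Hsh ?Es /eff_price /=; first ring.
    + by move=> i; rewrite !Es.
    + by move=> i; rewrite !Es.
  have Hd : 0 <= p - m by have := nonneg _ Heq i0; rewrite Epr; nra.
  case: (eqVneq (p - m) 0) => Hd0.
  + have := Heq i0 (p + t + s / 2, false).
    rewrite Epr Hd0 mul0r /profit /demand.
    rewrite (share_one (fun j0 => attentive_cost t s (deviate sigma i0 (p + t + s / 2, false) j0)) i0).
    * rewrite /deviate eqxx /eff_price /=.
      have := share_ge0 (fun j0 => perceived_price t theta (deviate sigma i0 (p + t + s / 2, false) j0)) i0.
      set a := share _ _ => ha.
      have hM : 0 < p + t + s / 2 + 0 - t - m.
        have : 0 < s / 2 by apply: divr_gt0.
        lra.
      have hD : 0 < lam * 1 + (1 - lam) * a by nra.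
      have := mulr_gt0 hM hD; lra.
    * move=> i hi; rewrite /deviate eqxx (negbTE hi) /attentive_cost /eff_price Es /=.
      have : 0 < s / 2 by apply: divr_gt0.
      have : s / 2 < s by rewrite ltr_pdivrMr //; lra.
      lra.
  + have Hdp : 0 < p - m by rewrite lt_def Hd0 Hd.
    set d := p - m in Hdp.
    have := Heq i0 (p - d / 4, true).
    rewrite Epr /profit /demand.
    rewrite (share_one (fun j0 => perceived_price t theta (deviate sigma i0 (p - d / 4, true) j0)) i0).
    rewrite (share_one (fun j0 => attentive_cost t s (deviate sigma i0 (p - d / 4, true) j0)) i0).
    * rewrite /deviate eqxx /eff_price /= -/d.
      have hd : d = p - m by [].
      have -> : lam * 1 + (1 - lam) * 1 = 1 by ring.
      have := ler_wpM2l (ltW Hdp) Hx2; lra.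
    * move=> i hi; rewrite /deviate eqxx (negbTE hi) /attentive_cost /eff_price Es /=.
      have hd : d = p - m by [].
      lra.
    * move=> i hi; rewrite /deviate eqxx (negbTE hi) /perceived_price Es /=.
      have hd : d = p - m by [].
      lra.
- apply: (part1 sigma) => // k; by rewrite (Hsym k i0).
Qed.
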